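(* Let $\mathcal{G}$ be a Grothendieck category, $X\in\mathcal{G}$, $\sigma$ an ordinal, $(X_\alpha\mid\alpha\le\sigma)$ a chain of subobjects of $X$ with $X_0=0$, $X_\sigma=X$, $X_\mu=\bigcup_{\alpha<\mu}X_\alpha$ for limit $\mu\le\sigma$, and let $(A_\alpha\mid\alpha<\sigma)$ be subobjects of $X$ with $X_{\alpha+1}=X_\alpha+A_\alpha$ for all $\alpha<\sigma$. Let $\mathcal{L}$ be the set of closed subsets of $\sigma$. If $(S_i\mid i\in I)$ is any family of elements of $\mathcal{L}$, then $\bigcup_{i\in I}S_i\in\mathcal{L}$ and $\bigcap_{i\in I}S_i\in\mathcal{L}$. Moreover, the restriction $\ell:\mathcal{L}\to\mathrm{Subobj}(X)$ is a complete lattice homomorphism, i.e. $\ell(\bigcup_i S_i)=\sum_i\ell(S_i)$ and $\ell(\bigcap_iS_i)=\bigcap_i\ell(S_i)$.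
   Context: For $S\subseteq\sigma$ (with $\sigma$ identified with the set of ordinals $<\sigma$), $\ell(S)=\sum_{\alpha\in S}A_\alpha\in\mathrm{Subobj}(X)$. A subset $S\subseteq\sigma$ is called closed if every $\alpha\in S$ satisfies $X_\alpha\cap A_\alpha\subseteq\sum_{\gamma\in S,\,\gamma<\alpha}A_\gamma$. Sums, intersections and direct unions are taken in the lattice $\mathrm{Subobj}(X)$ of subobjects of $X$. *)

(* Defs.v *)
(* Subobj(X) of an object X of a Grothendieck category is modelled by its
   defining lattice-theoretic structure: a complete, modular, upper
   continuous (AB5) lattice. *)
From Stdlib Require Import Classical.

Definition jn {T : Type} (sup : (T -> Prop) -> T) (a b : T) : T :=
  sup (fun x => x = a \/ x = b).

Definition mt {T : Type} (le : T -> T -> Prop) (sup : (T -> Prop) -> T)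
  (a b : T) : T := sup (fun x => le x a /\ le x b).

Definition inf {T : Type} (le : T -> T -> Prop) (sup : (T -> Prop) -> T)
  (P : T -> Prop) : T := sup (fun x => forall y, P y -> le x y).

Definition is_lub {T : Type} (le : T -> T -> Prop) (P : T -> Prop) (x : T) :=
  (forall y, P y -> le y x) /\ (forall z, (forall y, P y -> le y z) -> le x z).

Definition directed {T : Type} (le : T -> T -> Prop) (D : T -> Prop) :=
  (exists d, D d) /\
  (forall d1 d2, D d1 -> D d2 -> exists d, D d /\ le d1 d /\ le d2 d).

Record UCModLattice := {
  car :> Type;
  le : car -> car -> Prop;
  sup : (car -> Prop) -> car;
  le_refl : forall a, le a a;
  le_trans : forall a b c, le a b -> le b c -> le a c;
  le_antisym : forall a b, le a b -> le b a -> a = b;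
  sup_lub : forall P, is_lub le P (sup P);
  modular : forall a b c, le a c -> jn sup a (mt le sup b c) = mt le sup (jn sup a b) c;
  upper_continuous : forall a D, directed le D ->
    mt le sup a (sup D) = sup (fun x => exists d, D d /\ x = mt le sup a d)
}.

Arguments le {_}.
Arguments sup {_}.

Definition Ljoin {L : UCModLattice} (a b : L) : L := jn sup a b.
Definition Lmeet {L : UCModLattice} (a b : L) : L := mt le sup a b.
Definition Linf {L : UCModLattice} (P : L -> Prop) : L := inf le sup P.
Definition Lbot {L : UCModLattice} : L := sup (fun _ => False).
Definition Ltop {L : UCModLattice} : L := sup (fun _ => True).

Definition ell {L : UCModLattice} {O : Type} (A : O -> L) (S : O -> Prop) : L :=
  sup (fun x => exists a, S a /\ x = A a).

(* S is a closed subset of sigma (ordinals are the elements of O below sigma):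
   S ⊆ sigma and  X_a ∩ A_a ⊆ sum_{g in S, g < a} A_g  for all a in S. *)
Definition closed_set {L : UCModLattice} {O : Type} (lt : O -> O -> Prop)
  (sigma : O) (X A : O -> L) (S : O -> Prop) : Prop :=
  (forall a, S a -> lt a sigma) /\
  (forall a, S a -> le (Lmeet (X a) (A a)) (ell A (fun g => S g /\ lt g a))).

(* Main.v *)
Require Import Defs.
From Stdlib Require Import Classical.

Section Lat.
Variable L : UCModLattice.
Implicit Types a b c x y z : L.

Lemma sup_ub (P : L -> Prop) y : P y -> le y (sup P).
Proof. intro H. exact (proj1 (sup_lub L P) y H). Qed.
Lemma sup_least (P : L -> Prop) z : (forall y, P y -> le y z) -> le (sup P) z.
Proof. intro H. exact (proj2 (sup_lub L P) z H). Qed.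
Lemma meet_l a b : le (Lmeet a b) a.
Proof. unfold Lmeet, mt. apply sup_least. intros y [H _]. exact H. Qed.
Lemma meet_r a b : le (Lmeet a b) b.
Proof. unfold Lmeet, mt. apply sup_least. intros y [_ H]. exact H. Qed.
Lemma meet_glb x a b : le x a -> le x b -> le x (Lmeet a b).
Proof. intros. unfold Lmeet, mt. apply sup_ub. auto. Qed.
Lemma join_l a b : le a (Ljoin a b).
Proof. unfold Ljoin, jn. apply sup_ub. auto. Qed.
Lemma join_r a b : le b (Ljoin a b).
Proof. unfold Ljoin, jn. apply sup_ub. auto. Qed.
Lemma join_lub a b z : le a z -> le b z -> le (Ljoin a b) z.
Proof. intros. unfold Ljoin, jn. apply sup_least. intros y [->| ->]; auto. Qed.
Lemma inf_lb (P : L -> Prop) y : P y -> le (Linf P) y.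
Proof. intro H. unfold Linf, inf. apply sup_least. intros x Hx. auto. Qed.
Lemma inf_glb (P : L -> Prop) x : (forall y, P y -> le x y) -> le x (Linf P).
Proof. intro H. unfold Linf, inf. apply sup_ub. auto. Qed.
Lemma bot_le x : le Lbot x.
Proof. unfold Lbot. apply sup_least. tauto. Qed.
Lemma le_top x : le x Ltop.
Proof. unfold Ltop. apply sup_ub. auto. Qed.
Lemma modular_le a b c : le a c -> le (Lmeet (Ljoin a b) c) (Ljoin a (Lmeet b c)).
Proof.
  intro H. unfold Lmeet, Ljoin. rewrite (modular L a b c H). apply le_refl.
Qed.
Lemma cont_le a (D : L -> Prop) : directed le D ->
  le (Lmeet a (sup D)) (sup (fun x => exists d, D d /\ x = Lmeet a d)).
Proof.
  intro H. unfold Lmeet. rewrite (upper_continuous L a D H). apply le_refl.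
Qed.
Lemma lt' a b c : le a b -> le b c -> le a c.
Proof. apply le_trans. Qed.

Variable O : Type.
Variable A : O -> L.
Lemma ell_mono (S T : O -> Prop) : (forall g : O, S g -> T g) -> le (ell A S) (ell A T).
Proof.
  intro H. unfold ell. apply sup_least. intros y [g [Ha ->]]. apply sup_ub. eauto.
Qed.
Lemma ell_le (S : O -> Prop) z : (forall g : O, S g -> le (A g) z) -> le (ell A S) z.
Proof. intro H. unfold ell. apply sup_least. intros y [g [Ha ->]]. auto. Qed.
Lemma A_le_ell (S : O -> Prop) (g : O) : S g -> le (A g) (ell A S).
Proof. intro H. unfold ell. apply sup_ub. eauto. Qed.
End Lat.
Section Ord.
Variable L : UCModLattice.
Variable O : Type.
Variable lt : O -> O -> Prop.
Hypothesis lt_irrefl : forall a, ~ lt a a.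
Hypothesis lt_trans : forall a b c, lt a b -> lt b c -> lt a c.
Hypothesis lt_total : forall a b, lt a b \/ a = b \/ lt b a.
Hypothesis lt_wf : well_founded lt.
Variable sigma : O.
Hypothesis sigma_max : forall a, a = sigma \/ lt a sigma.
Variables X A : O -> L.
Hypothesis X_chain : forall a b, lt a b -> le (X a) (X b).
Hypothesis X_zero : forall a0, (forall b, ~ lt b a0) -> X a0 = Lbot.
Hypothesis X_limit : forall mu, (exists a, lt a mu) ->
     (forall a, lt a mu -> exists b, lt a b /\ lt b mu) ->
     X mu = sup (fun x => exists a, lt a mu /\ x = X a).
Hypothesis X_succ : forall a b, lt a sigma -> lt a b ->
     (forall g, lt a g -> g = b \/ lt b g) ->
     X b = Ljoin (X a) (A a).

Definition Bw (S : O -> Prop) (a : O) := fun g => S g /\ lt g a.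

Lemma classify b : (forall c, ~ lt c b) \/
  (exists b', lt b' b /\ forall c, lt c b -> c = b' \/ lt c b') \/
  ((exists c, lt c b) /\ forall c, lt c b -> exists d, lt c d /\ lt d b).
Proof.
  destruct (classic (exists c, lt c b)) as [[c Hc]|Hn].
  - right. destruct (classic (forall c, lt c b -> exists d, lt c d /\ lt d b)) as [H|H].
    + right. eauto.
    + left. apply not_all_ex_not in H as [c' H].
      apply imply_to_and in H as [H1 H2]. exists c'. split; auto.
      intros e He. destruct (lt_total e c') as [?|[?|?]]; auto.
      exfalso. apply H2. eauto.
  - left. intros c Hc. apply Hn. eauto.
Qed.

Lemma succ_prop b' b : lt b' b -> (forall c, lt c b -> c = b' \/ lt c b') ->
  forall g, lt b' g -> g = b \/ lt b g.
Proof.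
  intros H1 H2 g Hg. destruct (lt_total g b) as [H|[H|H]]; auto.
  destruct (H2 g H) as [->|H3].
  - exfalso; eapply lt_irrefl; eauto.
  - exfalso; eapply lt_irrefl; eauto.
Qed.

Lemma le_sigma a : lt a sigma \/ a = sigma.
Proof. destruct (sigma_max a); auto. Qed.

Lemma minimal_above g s : lt g s -> exists m, lt g m /\ forall c, lt g c -> ~ lt c m.
Proof.
  revert s. apply (well_founded_ind lt_wf (fun s => lt g s -> exists m, lt g m /\ forall c, lt g c -> ~ lt c m)).
  intros s IH Hs. destruct (classic (exists c, lt g c /\ lt c s)) as [[c [H1 H2]]|Hn].
  - exact (IH c H2 H1).
  - exists s. split; auto. intros c H1 H2. apply Hn. eauto.
Qed.

Lemma X_mono a b : lt a b \/ a = b -> le (X a) (X b).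
Proof. intros [H| ->]; auto. apply le_refl. Qed.

Lemma A_le_X g a : lt g a -> le (A g) (X a).
Proof.
  intro H. destruct (minimal_above g a H) as [m [Hm Hmin]].
  assert (Hs : X m = Ljoin (X g) (A g)).
  { apply X_succ; auto.
    - destruct (le_sigma a) as [Ha| ->]; eauto.
    - intros c Hc. destruct (lt_total c m) as [?|[?|?]]; auto.
      exfalso; eapply Hmin; eauto. }
  eapply le_trans. { apply (join_r L (X g)). }
  rewrite <- Hs. apply X_mono.
  destruct (lt_total m a) as [?|[?|?]]; [left; assumption|right; assumption|]. exfalso; exact (Hmin a H H0).
Qed.

Lemma ell_Bw_X S a : le (ell A (Bw S a)) (X a).
Proof. apply ell_le. intros g [_ H]. apply A_le_X; auto. Qed.

Lemma directed_chain (F : O -> L) b : (exists c, lt c b) ->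
  (forall c d, lt c d -> le (F c) (F d)) ->
  directed le (fun x => exists c, lt c b /\ x = F c).
Proof.
  intros [c Hc] Hm. split; [eauto|].
  intros d1 d2 [c1 [H1 ->]] [c2 [H2 ->]].
  destruct (lt_total c1 c2) as [H|[<-|H]].
  - exists (F c2). repeat split; eauto. apply le_refl.
  - exists (F c1). repeat split; eauto; apply le_refl.
  - exists (F c1). repeat split; eauto. apply le_refl.
Qed.

Definition closed' (S : O -> Prop) :=
  forall a, S a -> le (Lmeet (X a) (A a)) (ell A (Bw S a)).

Lemma Bw_mono S c d : lt c d \/ c = d -> le (ell A (Bw S c)) (ell A (Bw S d)).
Proof.
  intro H. apply ell_mono. intros g [H1 H2]. split; auto.
  destruct H as [H| <-]; eauto.
Qed.

Lemma limit_ell S b : (forall c, lt c b -> exists d, lt c d /\ lt d b) ->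
  le (ell A (Bw S b)) (sup (fun x => exists c, lt c b /\ x = ell A (Bw S c))).
Proof.
  intro Hl. apply ell_le. intros g [Hg Hgb].
  destruct (Hl g Hgb) as [d [H1 H2]].
  eapply le_trans. 2:{ apply sup_ub. exists d. split; eauto. }
  apply A_le_ell. split; auto.
Qed.

Lemma K S : closed' S -> forall b a, lt a b ->
  le (Lmeet (X a) (ell A (Bw S b))) (ell A (Bw S a)).
Proof.
  intro HS. intro b. induction b as [b IH] using (well_founded_ind lt_wf).
  intros a Hab.
  destruct (classify b) as [Hmin|[[b' [Hb' Hsucc]]|[Hne Hlim]]].
  - exfalso. eapply Hmin; eauto.
  - assert (Step : le (Lmeet (X b') (ell A (Bw S b))) (ell A (Bw S b'))).
    { destruct (classic (S b')) as [Sb|nSb].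
      - set (e := ell A (Bw S b')).
        assert (H1 : le (ell A (Bw S b)) (Ljoin e (A b'))).
        { apply ell_le. intros g [Hg Hgb]. destruct (Hsucc g Hgb) as [->|H].
          - apply join_r.
          - eapply le_trans. 2: apply join_l. apply A_le_ell. split; auto. }
        eapply le_trans.
        { apply meet_glb. 2: apply meet_l. eapply le_trans. apply meet_r. exact H1. }
        eapply le_trans. { apply modular_le. apply ell_Bw_X. }
        apply join_lub. apply le_refl.
        eapply le_trans. 2: apply (HS b' Sb).
        apply meet_glb. apply meet_r. apply meet_l.
      - eapply le_trans. apply meet_r. apply ell_mono.
        intros g [Hg Hgb]. split; auto. destruct (Hsucc g Hgb) as [->|H]; tauto. }
    destruct (Hsucc a Hab) as [->|Ha]; auto.
    eapply le_trans. 2: apply (IH b' Hb' a Ha).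
    apply meet_glb. apply meet_l.
    eapply le_trans. 2: exact Step.
    apply meet_glb. eapply le_trans. apply meet_l. apply X_chain; auto. apply meet_r.
  - eapply le_trans.
    { apply meet_glb. apply meet_l. eapply le_trans. apply meet_r. apply (limit_ell S b Hlim). }
    eapply le_trans. { apply cont_le. apply directed_chain; auto.
      intros c d H. apply Bw_mono; auto. }
    apply sup_least. intros y [d [[c [Hc ->]] ->]].
    destruct (lt_total a c) as [H|[<-|H]].
    + apply IH; auto.
    + apply meet_r.
    + eapply le_trans. apply meet_r. apply Bw_mono; auto.
Qed.

Variables (I : Type) (S : I -> O -> Prop).
Hypothesis HSc : forall i, closed' (S i).
Definition NN := fun a => lt a sigma /\ forall i, S i a.
Definition yy b := Lmeet (X b) (Linf (fun x => exists i, x = ell A (Bw (S i) b))).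

Lemma y_le_i b i : le (yy b) (ell A (Bw (S i) b)).
Proof. eapply le_trans. apply meet_r. apply inf_lb. eauto. Qed.

Lemma Q b : le (yy b) (ell A (Bw NN b)).
Proof.
  induction b as [b IH] using (well_founded_ind lt_wf).
  destruct (classify b) as [Hmin|[[b' [Hb' Hsucc]]|[Hne Hlim]]].
  - eapply le_trans. apply meet_l. rewrite (X_zero b Hmin). apply bot_le.
  - assert (Step : le (Lmeet (X b') (yy b)) (yy b')).
    { apply meet_glb. apply meet_l. apply inf_glb. intros z [i ->].
      eapply le_trans; [|apply (K (S i) (HSc i) b b' Hb')].
      apply meet_glb. apply meet_l. eapply le_trans. apply meet_r. apply y_le_i. }
    assert (StepN : le (Lmeet (X b') (yy b)) (ell A (Bw NN b))).
    { eapply le_trans. exact Step. eapply le_trans. apply (IH b' Hb').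
      apply Bw_mono. left; exact Hb'. }
    assert (Hbs : lt b' sigma).
    { destruct (le_sigma b) as [H| ->]; eauto. }
    assert (Hxb : X b = Ljoin (X b') (A b')).
    { apply X_succ; auto. apply succ_prop; auto. }
    destruct (classic (NN b')) as [Nb|nNb].
    + assert (HA : le (A b') (yy b)).
      { apply meet_glb. apply A_le_X; auto. apply inf_glb. intros z [i ->].
        apply A_le_ell. split; auto. apply (proj2 Nb). }
      eapply le_trans.
      { apply (meet_glb _ (yy b) (Ljoin (A b') (X b')) (yy b)).
        - eapply le_trans. apply meet_l. rewrite Hxb. apply join_lub. apply join_r. apply join_l.
        - apply le_refl. }
      eapply le_trans. apply (modular_le _ (A b') (X b') (yy b) HA).
      apply join_lub. apply A_le_ell. split; auto. exact StepN.
    + assert (Hn : ~ forall i, S i b') by (intro H; apply nNb; split; auto).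
      apply not_all_ex_not in Hn as [i0 Hi0].
      eapply le_trans. 2: exact StepN. apply meet_glb. 2: apply le_refl.
      eapply le_trans. apply (y_le_i b i0). eapply le_trans. 2: apply (ell_Bw_X (S i0) b').
      apply ell_mono. intros g [Hg Hgb]. split; auto.
      destruct (Hsucc g Hgb) as [->|H]; tauto.
  - assert (HX : le (yy b) (sup (fun x => exists c, lt c b /\ x = X c))).
    { eapply le_trans. apply meet_l. rewrite (X_limit b Hne Hlim). apply le_refl. }
    eapply le_trans. { apply meet_glb. apply le_refl. exact HX. }
    eapply le_trans. { apply cont_le. apply directed_chain; auto. }
    apply sup_least. intros z [d [[c [Hc ->]] ->]].
    eapply le_trans. 2: apply (Bw_mono NN c b (or_introl Hc)).
    eapply le_trans. 2: apply (IH c Hc).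
    apply meet_glb. apply meet_r. apply inf_glb. intros z [i ->].
    eapply le_trans; [|apply (K (S i) (HSc i) b c Hc)].
    apply meet_glb. apply meet_r. eapply le_trans. apply meet_l. apply y_le_i.
Qed.
End Ord.


Theorem lemma2p5
  (L : UCModLattice)
  (* the ordinals <= sigma, as a well-ordered type with greatest element sigma *)
  (O : Type) (lt : O -> O -> Prop)
  (lt_irrefl : forall a, ~ lt a a)
  (lt_trans : forall a b c, lt a b -> lt b c -> lt a c)
  (lt_total : forall a b, lt a b \/ a = b \/ lt b a)
  (lt_wf : well_founded lt)
  (sigma : O) (sigma_max : forall a, a = sigma \/ lt a sigma)
  (X A : O -> L)
  (X_chain : forall a b, lt a b -> le (X a) (X b))
  (X_zero : forall a0, (forall b, ~ lt b a0) -> X a0 = Lbot)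
  (X_top : X sigma = Ltop)
  (X_limit : forall mu, (exists a, lt a mu) ->
     (forall a, lt a mu -> exists b, lt a b /\ lt b mu) ->
     X mu = sup (fun x => exists a, lt a mu /\ x = X a))
  (X_succ : forall a b, lt a sigma -> lt a b ->
     (forall g, lt a g -> g = b \/ lt b g) ->
     X b = Ljoin (X a) (A a))
  (I : Type) (S : I -> O -> Prop)
  (HS : forall i, closed_set lt sigma X A (S i)) :
  let U := fun a => exists i, S i a in
  let N := fun a => lt a sigma /\ forall i, S i a in
  closed_set lt sigma X A U /\
  closed_set lt sigma X A N /\
  ell A U = sup (fun x => exists i, x = ell A (S i)) /\
  ell A N = Linf (fun x => exists i, x = ell A (S i)).
Proof.
  intros U N.
  assert (HSc : forall i, closed' L O lt X A (S i)).
  { intros i a Ha. exact (proj2 (HS i) a Ha). }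
  pose proof (Q L O lt lt_irrefl lt_trans lt_total lt_wf sigma sigma_max X A
     X_chain X_zero X_limit X_succ I S HSc) as HQ.
  assert (HN : forall g, NN O lt sigma I S g <-> N g) by (intro; unfold NN, N; tauto).
  split; [|split; [|split]].
  - split.
    + intros a [i Ha]. exact (proj1 (HS i) a Ha).
    + intros a [i Ha]. eapply le_trans. apply (proj2 (HS i) a Ha).
      apply ell_mono. intros g [Hg Hga]. split; [exists i|]; auto.
  - split.
    + intros a [Ha _]. exact Ha.
    + intros a Na. eapply le_trans.
      2:{ eapply le_trans. apply (HQ a). apply ell_mono. intros g [Hg Hga]. split; [apply HN; exact Hg | exact Hga]. }
      apply meet_glb. apply meet_l. apply inf_glb. intros z [i ->].
      apply (proj2 (HS i) a (proj2 Na i)).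
  - apply le_antisym.
    + apply ell_le. intros g [i Hg]. eapply le_trans. apply (A_le_ell L O A (S i) g Hg).
      apply sup_ub. eauto.
    + apply sup_least. intros z [i ->]. apply ell_mono. intros g Hg. exists i; auto.
  - apply le_antisym.
    + apply inf_glb. intros z [i ->]. apply ell_mono. intros g [_ Hg]. auto.
    + eapply le_trans. 2:{ eapply le_trans. apply (HQ sigma). apply ell_mono.
        intros g [Hg _]. apply HN; exact Hg. }
      apply meet_glb. rewrite X_top. apply le_top.
      apply inf_glb. intros z [i ->]. eapply le_trans. apply inf_lb. exists i; reflexivity.
      apply ell_mono. intros g Hg. split; auto. exact (proj1 (HS i) g Hg).
Qed.
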